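(* Let $I=(G,T,k)$, $G=(V,E)$, be a Node Multiway Cut instance satisfying: (R1) no two terminals are adjacent and $p(I)\ge 0$; (R2) no vertex of $V\setminus T$ is adjacent to two distinct terminals; (R3) for every terminal $t\in T$ and every neighbour $w\in V\setminus T$ of $t$, the optimum value of the LP-relaxation of $I$ with the additional constraint $d_w=0$ is strictly larger than $LP(I)$. Then: (1) the assignment $d_v=1/2$ for $v\in N(T)$ and $d_v=0$ for $v\in V\setminus (T\cup N(T))$ is an optimal solution to the LP-relaxation of $I$; (2) for every terminal $t\in T$, the set $N(t)$ is the unique minimum separating cut of $t$.
   Context: A Node Multiway Cut instance $I=(G,T,k)$ consists of a simple undirected graph $G=(V,E)$, a set $T\subseteq V$ of terminals and an integer $k$; it is a YES-instance iff there is a set $X\subseteq V\setminus T$ with $|X|\le k$ such that every path in $G$ between two distinct terminals contains a vertex of $X$. Let $\mathcal P(I)$ be the set of all simple paths in $G$ connecting two distinct terminals. The LP-relaxation of $I$ is: minimize $\sum_{v\in V\setminus T} d_v$ subject to $\sum_{v\in V(P)\setminus T} d_v\ge 1$ for every $P\in\mathcal P(I)$ and $d_v\ge 0$ for all $v\in V\setminus T$. $LP(I)$ denotes its optimum value and $p(I)=k-LP(I)$. $N(v)$ is the set of neighbours of $v$, $N(S)=\bigcup_{v\in S}N(v)\setminus S$. For $t\in T$, a separating cut of $t$ is a set $S\subseteq V\setminus T$ such that $t$ is disconnected from $T\setminus\{t\}$ in $G-S$. *)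

(* Defs.v *)
From HB Require Import structures.
From mathcomp Require Import all_boot all_order all_algebra.
Set Implicit Arguments. Unset Strict Implicit. Unset Printing Implicit Defensive.
Import Order.TTheory GRing.Theory Num.Theory.

Section NMC.
Variables (V : finType) (e : rel V) (T : {set V}).

Definition nbh (v : V) : {set V} := [set u | e v u].
Definition nbhS (S : {set V}) : {set V} := (\bigcup_(v in S) nbh v) :\: S.

Definition term_path (x : V) (s : seq V) : bool :=
  [&& path e x s, uniq (x :: s), x \in T, last x s \in T & x != last x s].

Variable R : realFieldType.
Local Open Scope ring_scope.

Definition lp_cost (d : V -> R) : R := \sum_(v in ~: T) d v.

Definition lp_feasible (Z : {set V}) (d : V -> R) : Prop :=
  (forall v, v \notin T -> 0 <= d v) /\
  (forall x s, term_path x s -> 1 <= \sum_(v <- x :: s | v \notin T) d v) /\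
  (forall w, w \in Z -> d w = 0).

Definition lp_value (Z : {set V}) (x : R) : Prop :=
  (exists d, lp_feasible Z d /\ lp_cost d = x) /\
  (forall d, lp_feasible Z d -> x <= lp_cost d).

Definition lp_optimal (d : V -> R) : Prop :=
  lp_feasible set0 d /\ forall d', lp_feasible set0 d' -> lp_cost d <= lp_cost d'.

End NMC.

Definition del_rel (V : finType) (e : rel V) (S : {set V}) : rel V :=
  [rel x y | [&& e x y, x \notin S & y \notin S]].

Definition sep_cut (V : finType) (e : rel V) (T : {set V}) (t : V) (S : {set V}) : bool :=
  (S \subset ~: T) &&
  [forall t' in T :\ t, ~~ connect (del_rel e S) t t'].

Definition unique_min_sep_cut (V : finType) (e : rel V) (T : {set V}) (t : V) (S : {set V}) : Prop :=
  sep_cut e T t S /\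
  forall S', sep_cut e T t S' -> #|S'| <= #|S| -> S' = S.

(* Main.v *)
Require Import Defs.
From HB Require Import structures.
From mathcomp Require Import all_boot all_order all_algebra.
From mathcomp Require Import ring lra.
Import Order.TTheory GRing.Theory Num.Theory.
Set Implicit Arguments. Unset Strict Implicit.
Local Open Scope ring_scope.

Lemma neq_sym (X : eqType) (x y : X) : x != y -> y != x.
Proof. by rewrite eq_sym. Qed.

Section Generic.
Variable R : realFieldType.

Fixpoint wsum (c0 : R) (cs : seq R) (F : R -> R) : R :=
  if cs is c :: cs' then (c - c0) * F c + wsum c cs' F else 0.

Lemma wsum_ext c0 cs F G : (forall c, c \in cs -> F c = G c) ->
  wsum c0 cs F = wsum c0 cs G.
Proof.
elim: cs c0 => //= c cs IH c0 H.
by rewrite H ?mem_head // (IH c) // => x Hx; apply: H; rewrite inE Hx orbT.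
Qed.

Lemma wsum_scale c0 cs k F : wsum c0 cs (fun c => k * F c) = k * wsum c0 cs F.
Proof.
elim: cs c0 => /= [|c cs IH] c0; first by rewrite mulr0.
by rewrite IH mulrDr mulrCA.
Qed.

Lemma wsum_add c0 cs F G :
  wsum c0 cs (fun c => F c + G c) = wsum c0 cs F + wsum c0 cs G.
Proof.
elim: cs c0 => /= [|c cs IH] c0; first by rewrite addr0.
by rewrite IH mulrDr addrACA.
Qed.

Lemma wsum_sum (I : finType) (A : {set I}) c0 cs (F : I -> R -> R) :
  wsum c0 cs (fun c => \sum_(i in A) F i c) = \sum_(i in A) wsum c0 cs (F i).
Proof.
elim: cs c0 => /= [|c cs IH] c0; first by rewrite big1.
by rewrite IH mulr_sumr -big_split.
Qed.

Lemma wsum_le c0 cs F G : sorted <%R (c0 :: cs) ->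
  (forall c, c \in cs -> F c <= G c) -> wsum c0 cs F <= wsum c0 cs G.
Proof.
elim: cs c0 => //= c cs IH c0 /andP[lt0 Hs] H.
apply: lerD; first by apply: ler_wpM2l; [rewrite subr_ge0 ltW | apply: H; rewrite mem_head].
by apply: IH => // x Hx; apply: H; rewrite inE Hx orbT.
Qed.

Lemma wsum_lt c0 cs F G : sorted <%R (c0 :: cs) ->
  (forall c, c \in cs -> F c <= G c) ->
  (exists2 c, c \in cs & F c < G c) -> wsum c0 cs F < wsum c0 cs G.
Proof.
elim: cs c0 => /= [|c cs IH] c0; first by move=> _ _ [].
move=> /andP[lt0 Hs] H [x]; rewrite inE => /orP[/eqP-> Hx|Hx Hlt].
  apply: ltr_leD; first by rewrite ltr_pM2l ?subr_gt0.
  by apply: wsum_le => // y Hy; apply: H; rewrite inE Hy orbT.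
apply: ler_ltD; first by apply: ler_wpM2l; [rewrite subr_ge0 ltW | apply: H; rewrite mem_head].
by apply: IH => //; [move=> y Hy; apply: H; rewrite inE Hy orbT| exists x].
Qed.

Lemma wsum0 c0 cs F : (forall c, c \in cs -> F c = 0) -> wsum c0 cs F = 0.
Proof.
move=> H; rewrite (wsum_ext c0 (G := fun c => 0 * 1)) ?wsum_scale ?mul0r // => c /H ->; rewrite mul0r.
Qed.

Definition ind (b : bool) : R := if b then 1 else 0.

Lemma wsum_int c0 cs al be : sorted <%R (c0 :: cs) ->
  al \in c0 :: cs -> be \in c0 :: cs -> al <= be ->
  wsum c0 cs (fun c => ind ((al < c) && (c <= be))) = be - al.
Proof.
elim: cs c0 al be => /= [|c cs IH] c0 al be.
  by move=> _; rewrite !inE => /eqP-> /eqP->; rewrite subrr.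
move=> Hs; have Hs' := Hs; rewrite /= in Hs'; case/andP: Hs' => lt0 Hs1.
have allc : all (fun x => c < x) cs.
  by move: Hs1; rewrite (path_sortedE lt_trans) => /andP[].
have allc0 : all (fun x => c0 < x) (c :: cs).
  apply/allP => x; rewrite inE => /orP[/eqP->//|Hx]; exact: lt_trans lt0 (allP allc _ Hx).
rewrite !inE => /orP[/eqP->|Hal] /orP[/eqP->|Hbe] Hle.
- rewrite subrr /ind lt_geF //= andbF mulr0 add0r wsum0 // => x Hx.
  have Hx0 : c0 < x by apply: (allP allc0); rewrite inE Hx orbT.
  by rewrite (lt_geF Hx0) andbF.
- have Hcb : c <= be.
    move: Hbe => /orP[/eqP->//|Hb]; exact: ltW (allP allc _ Hb).
  rewrite /ind lt0 Hcb mulr1 (wsum_ext c (G := fun x => ind ((c < x) && (x <= be)))).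
    by rewrite IH // ?mem_head // addrC addrA subrK.
  move=> x Hx; rewrite (allP allc _ Hx); congr ind.
  by rewrite (lt_trans lt0 (allP allc _ Hx)).
- move: Hle; rewrite le_eqVlt => /orP[/eqP Heq|Hlt].
    by move: (allP allc0 _ Hal); rewrite Heq ltxx.
  by move: (lt_trans Hlt (allP allc0 _ Hal)); rewrite ltxx.
- have Hca : c <= al.
    move: Hal => /orP[/eqP->//|Hb]; exact: ltW (allP allc _ Hb).
  by rewrite /ind (le_gtF Hca) /= mulr0 add0r IH.
Qed.

Lemma sum_undup (X : eqType) (s : seq X) (f : X -> R) :
  (forall u, u \in s -> 0 <= f u) ->
  \sum_(u <- undup s) f u <= \sum_(u <- s) f u.
Proof.
elim: s => //= x s IH H.
have IH' : \sum_(u <- undup s) f u <= \sum_(u <- s) f u.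
  by apply: IH => u Hu; apply: H; rewrite inE Hu orbT.
case: ifP => _; rewrite big_cons.
  by rewrite -[X in X <= _]add0r; apply: lerD => //; apply: H; rewrite mem_head.
by rewrite big_cons; apply: lerD.
Qed.

Lemma sum_sub (X : eqType) (s1 s2 : seq X) (f : X -> R) :
  uniq s1 -> {subset s1 <= s2} -> (forall u, u \in s2 -> 0 <= f u) ->
  \sum_(u <- s1) f u <= \sum_(u <- s2) f u.
Proof.
move=> u1 sub H; apply: le_trans (sum_undup H).
have pe : perm_eq s1 [seq u <- undup s2 | u \in s1].
  apply: uniq_perm => //; first by rewrite filter_uniq ?undup_uniq.
  by move=> u; rewrite mem_filter mem_undup; case: (boolP (u \in s1)) => // /sub ->.
rewrite (perm_big _ pe) big_filter [X in _ <= X](bigID (fun u => u \in s1)) /=.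
rewrite lerDl big_seq_cond; apply: sumr_ge0 => u /andP[Hu _].
by apply: H; rewrite -mem_undup.
Qed.

Lemma sum_two (X : eqType) (s : seq X) (f : X -> R) u q :
  uniq s -> (forall v, v \in s -> 0 <= f v) -> u \in s -> q \in s ->
  (u != q -> 1 <= f u + f q) -> (u = q -> 1 <= f u) ->
  1 <= \sum_(v <- s) f v.
Proof.
move=> us H us' qs H1 H2; case: (eqVneq u q) => [Heq|Hne].
  apply: le_trans (H2 Heq) _.
  have := @sum_sub X [:: u] s f isT.
  by rewrite big_seq1; apply => // v; rewrite inE => /eqP->.
apply: le_trans (H1 Hne) _.
have := @sum_sub X [:: u; q] s f.
rewrite big_cons big_seq1; apply => //; first by rewrite /= inE Hne.
by move=> v; rewrite !inE => /orP[]/eqP->.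
Qed.

Lemma bigmin_le1 (X : Type) (s : seq X) (P : pred X) (F : X -> R) :
  \big[Num.min/1]_(i <- s | P i) F i <= 1.
Proof.
elim: s => [|x s IH]; rewrite ?big_nil ?big_cons //.
by case: ifP => // _; rewrite ge_min IH orbT.
Qed.

Lemma bigmin_le (X : eqType) (s : seq X) (P : pred X) (F : X -> R) i :
  i \in s -> P i -> \big[Num.min/1]_(j <- s | P j) F j <= F i.
Proof.
elim: s => // x s IH; rewrite inE big_cons => /orP[/eqP<- ->|Hi Pi].
  by rewrite ge_min lexx.
by case: ifP => _; [rewrite ge_min IH ?orbT | exact: IH].
Qed.

Lemma bigmin_ge0 (X : Type) (s : seq X) (P : pred X) (F : X -> R) :
  (forall i, P i -> 0 <= F i) -> 0 <= \big[Num.min/1]_(i <- s | P i) F i.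
Proof.
move=> H; elim: s => [|x s IH]; rewrite ?big_nil ?big_cons //.
by case: ifP => // Px; rewrite le_min IH H.
Qed.

Lemma bigmin_real (X : eqType) (s : seq X) (P : pred X) (F : X -> R) :
  \big[Num.min/1]_(i <- s | P i) F i < 1 ->
  exists i, [/\ i \in s, P i & F i = \big[Num.min/1]_(j <- s | P j) F j].
Proof.
elim: s => [|x s IH]; rewrite ?big_nil ?ltxx // big_cons.
have Hs : (exists i, [/\ i \in s, P i & F i = \big[Num.min/1]_(j <- s | P j) F j]) ->
  exists i, [/\ i \in x :: s, P i & F i = \big[Num.min/1]_(j <- s | P j) F j].
  by case=> i [H1 H2 H3]; exists i; rewrite inE H1 orbT.
case: ifP => Px; last by move/IH.
rewrite minElt; case: ifP => Hlt H; first by exists x; rewrite mem_head.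
by case: (IH H) => i [H1 H2 H3]; exists i; rewrite inE H1 orbT.
Qed.
End Generic.
Arguments ind {R}.

Section Graph.
Variables (R : realFieldType) (V : finType) (e : rel V) (T : {set V}).
Hypothesis e_sym : symmetric e.
Hypothesis R1a : forall t t', t \in T -> t' \in T -> ~~ e t t'.
Variable d : V -> R.
Hypothesis dfeas : lp_feasible e T set0 d.

Definition D v : R := if v \in T then 0 else d v.

Lemma D_ge0 v : 0 <= D v.
Proof. by rewrite /D; case: ifPn => // H; case: dfeas => H1 _; apply: H1. Qed.

Lemma DT v : v \in T -> D v = 0.
Proof. by rewrite /D => ->. Qed.

Lemma sumD (f : V -> R) s :
  \sum_(v <- s | v \notin T) f v = \sum_(v <- s) (if v \in T then 0 else f v).
Proof. by rewrite big_mkcond; apply: eq_bigr => v _; case: (v \in T). Qed.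

Lemma Dpath x s : term_path e T x s -> 1 <= \sum_(v <- x :: s) D v.
Proof. by case: dfeas => _ [H _] /H; rewrite sumD. Qed.

Fixpoint allseq n : seq (seq V) :=
  if n is n'.+1 then [::] :: [seq x :: s | x <- enum V, s <- allseq n']
  else [:: [::]].

Lemma allseqP n s : (size s <= n)%N -> s \in allseq n.
Proof.
elim: n s => [|n IH] [|x s] //=; rewrite ?inE // => Hs.
apply/orP; right; apply/allpairsP; exists (x, s) => /=.
by rewrite mem_enum IH.
Qed.

Definition W t v p := [&& path e t p, all (fun u => u \notin T) p & e (last t p) v].

Definition a t v : R :=
  \big[Num.min/1]_(p <- allseq #|V| | W t v p) \sum_(u <- p) D u.

Lemma a_ge0 t v : 0 <= a t v.
Proof. by apply: bigmin_ge0 => p _; apply: sumr_ge0 => u _; apply: D_ge0. Qed.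

Lemma a_le1 t v : a t v <= 1.
Proof. exact: bigmin_le1. Qed.

Lemma a_walk t v p : W t v p -> a t v <= \sum_(u <- p) D u.
Proof.
case/and3P => pp ap; case: (shortenP pp) => p' pp' up' sub' ep'.
have Wp' : W t v p'.
  by rewrite /W pp' ep' andbT; apply/allP => u /sub' /(allP ap).
have Hin : p' \in allseq #|V|.
  apply: allseqP; move/card_uniqP: up' => /= Hc.
  have := max_card (mem (t :: p')); rewrite Hc /=; exact: ltnW.
apply: le_trans (bigmin_le _ Hin Wp') _.
apply: sum_sub => //; first by case/andP: up'.
by move=> u _; apply: D_ge0.
Qed.

Lemma a_real t v : a t v < 1 -> exists p, W t v p /\ \sum_(u <- p) D u = a t v.
Proof. by case/bigmin_real => p [_ H1 H2]; exists p. Qed.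

Lemma a_N t v : e t v -> a t v = 0.
Proof.
move=> Htv; apply/le_anti; rewrite a_ge0 andbT.
have : W t v [::] by rewrite /W /= Htv.
by move/a_walk; rewrite big_nil.
Qed.

Lemma a_edge t u v : u \notin T -> e u v -> a t v <= a t u + D u.
Proof.
move=> Hu Huv; case: (ltP (a t u) 1) => Ha; last first.
  by apply: le_trans (a_le1 _ _) _; apply: le_trans Ha _; rewrite lerDl D_ge0.
case: (a_real Ha) => p [/and3P[pp ap ep] Hp].
have : W t v (rcons p u).
  by rewrite /W rcons_path pp ep all_rcons Hu ap last_rcons Huv.
by move/a_walk; rewrite -cats1 big_cat big_seq1 Hp.
Qed.

Lemma a_pair t t' v : t \in T -> t' \in T -> t != t' -> v \notin T ->
  1 <= a t v + D v + a t' v.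
Proof.
move=> Ht Ht' Htt Hv.
have Hge := a_ge0; have HD := D_ge0.
case: (ltP (a t v) 1) => Ha; last first.
  by apply: le_trans Ha _; rewrite -addrA lerDl addr_ge0.
case: (ltP (a t' v) 1) => Hb; last first.
  by apply: le_trans Hb _; rewrite lerDr addr_ge0.
case: (a_real Ha) => p [/and3P[pp ap ep] Hp].
case: (a_real Hb) => q [/and3P[pq aq eq] Hq].
set s := p ++ v :: rev (t' :: q).
have ps : path e t s.
  rewrite /s cat_path pp /= ep /=.
  have := rev_path e t' (rcons q v); rewrite last_rcons belast_rcons => ->.
  by rewrite (@eq_path _ _ e) ?rcons_path ?pq ?eq // => x y /=.
have lasts : last t s = t' by rewrite /s last_cat /= rev_cons last_rcons.
move: lasts; case: (shortenP ps) => s' ps' us' sub' ls'.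
have tp : term_path e T t s' by rewrite /term_path ps' us' Ht ls' Ht'.
apply: le_trans (Dpath tp) _.
apply: le_trans (@sum_sub _ _ (t :: s') (t :: s) D us' _ _) _.
- by move=> u; rewrite !inE => /orP[->//|/sub' ->]; rewrite orbT.
- by move=> u _; apply: D_ge0.
rewrite big_cons big_cat /= big_cons big_rev big_cons (DT Ht) (DT Ht') Hp.
by rewrite -[X in _ + (_ + (0 + X))]/(\sum_(j <- q) D j) Hq !add0r addrA.
Qed.


Definition bnd th t v := (a t v < th) && (th <= a t v + D v).
Definition cnt th v := #|[set t in T | bnd th t v]|.
Definition h th v : R :=
  if (1 < cnt th v)%N then 1 else if (0 < cnt th v)%N then 2^-1 else 0.

Lemma h_ge0 th v : 0 <= h th v.
Proof.
rewrite /h; case: ifP => _; first exact: ler01.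
by case: ifP => // _; rewrite invr_ge0 ler0n.
Qed.

Lemma h_half th v t : t \in T -> bnd th t v -> 2^-1 <= h th v.
Proof.
move=> Ht Hb; have : (0 < cnt th v)%N.
  by apply/card_gt0P; exists t; rewrite inE Ht Hb.
rewrite /h => ->; case: ifP => // _; lra.
Qed.

Lemma h_one th v t t' : t \in T -> t' \in T -> t != t' ->
  bnd th t v -> bnd th t' v -> h th v = 1.
Proof.
move=> Ht Ht' Htt Hb Hb'; have : (1 < cnt th v)%N.
  by apply/card_gt1P; exists t, t'; rewrite !inE Ht Hb Ht' Hb'.
by rewrite /h => ->.
Qed.

Lemma F1 t th : t \in T -> 0 < th -> forall x p, path e x p ->
  all (fun u => u \notin T) p ->
  (x = t \/ (x \notin T /\ a t x + D x < th)) ->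
  has (fun u => th <= a t u + D u) p -> has (bnd th t) p.
Proof.
move=> Ht Hth x p; elim: p x => //= y p IH x /andP[exy pp] /andP[Hy ap] Hx Hhas.
have Hay : a t y < th.
  case: Hx => [Hxt|[Hx Hxt]]; first by rewrite Hxt in exy; rewrite a_N.
  exact: le_lt_trans (a_edge t Hx exy) Hxt.
case: (leP th (a t y + D y)) => Hyb; first by rewrite /bnd Hay Hyb.
apply/orP; right; apply: IH pp ap _ _; first by right; split.
by move: Hhas; rewrite leNgt Hyb.
Qed.

Hypothesis R2 : forall v t t', v \notin T -> t \in T -> t' \in T -> t != t' ->
          e v t -> e v t' -> False.

Lemma h_feas th : 0 < th -> th <= 1 -> lp_feasible e T set0 (h th).
Proof.
move=> H0 H1; split; first by move=> v _; apply: h_ge0.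
split; last by move=> w; rewrite in_set0.
move=> x s tp; rewrite sumD.
case/and5P: (tp) => px ux xT lT xl.
have hasT : has (fun u => u \in T) s.
  case: s px ux lT xl {tp} => [|y s]; first by rewrite /= eqxx.
  move=> _ _ lT _; apply/hasP; exists (last y s) => //; exact: mem_last.
move: px ux xl lT; case: (split_find hasT) => t2 p r t2T hasp px ux _ _.
have ap : all (fun u => u \notin T) p by rewrite all_predC.
move: px; rewrite cat_path rcons_path => /andP[/andP[pp ept2] _].
have xt2 : x != t2.
  apply/eqP => Ext; move: ux; rewrite /= Ext mem_cat mem_rcons mem_head.
  by rewrite andFb.
case: p pp ept2 ap hasp ux => [|y p1] pp ept2 ap hasp ux.
  by move: (R1a xT t2T); rewrite /= ept2.
set z := last x (y :: p1).
have zin : z \in y :: p1 by rewrite /z /=; exact: mem_last.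
have zT : z \notin T by apply: (allP ap).
have yT : y \notin T by apply: (allP ap); rewrite mem_head.
have Ha1 : th <= a x z + D z.
  have := a_pair xT t2T xt2 zT; rewrite (@a_N t2 z) ?addr0; last by rewrite e_sym.
  by move=> Hh; apply: le_trans H1 Hh.
have [u1 u1in u1b] : exists2 u1, u1 \in y :: p1 & bnd th x u1.
  apply/hasP; apply: (F1 xT H0 pp ap); first by left.
  by apply/hasP; exists z.
have prev : path e t2 (rev (y :: p1)).
  have := rev_path e x (rcons (y :: p1) t2).
  rewrite last_rcons belast_rcons rev_cons rcons_path => Hr.
  suff : path (fun z => e^~ z) x (rcons (y :: p1) t2) by rewrite -Hr => /andP[].
  by rewrite (@eq_path _ _ e) ?rcons_path ?pp ?ept2 // => a1 b1 /=; rewrite e_sym.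
have Ha2 : th <= a t2 y + D y.
  have := a_pair t2T xT (neq_sym xt2) yT.
  rewrite (@a_N x y) ?addr0; last by case/andP: pp.
  by move=> Hh; apply: le_trans H1 Hh.
have [u2 u2in u2b] : exists2 u2, u2 \in rev (y :: p1) & bnd th t2 u2.
  apply/hasP; apply: (F1 t2T H0 prev); first by rewrite all_rev.
  - by left.
  - by apply/hasP; exists y => //; rewrite mem_rev mem_head.
rewrite mem_rev in u2in.
have inS : {subset y :: p1 <= x :: rcons (y :: p1) t2 ++ r}.
  by move=> u Hu; rewrite inE mem_cat mem_rcons inE Hu !orbT.
apply: (sum_two (u := u1) (q := u2)) => //.
- by move=> v _; case: (v \in T) => //; apply: h_ge0.
- exact: inS.
- exact: inS.
- move=> _; rewrite (negbTE (allP ap _ u1in)) (negbTE (allP ap _ u2in)).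
  have := h_half xT u1b; have := h_half t2T u2b; lra.
- move=> Heq; rewrite (negbTE (allP ap _ u1in)).
  by rewrite (h_one xT t2T xt2 u1b) // Heq.
Qed.


Lemma cl_ind (c A B : R) : 0 < c -> c <= 2^-1 ->
  ind ((A < c) && (c <= B)) =
  ind ((Num.min A 2^-1 < c) && (c <= Num.min B 2^-1)) :> R.
Proof.
move=> c0 c1; rewrite gt_min le_min c1 andbT.
by rewrite [2^-1 < c]ltNge c1 orbF.
Qed.

Lemma cl_lip (A D0 : R) : 0 <= D0 ->
  Num.min (A + D0) 2^-1 - Num.min A 2^-1 <= D0.
Proof. by move=> HD; rewrite !minElt; case: ltP => ?; case: ltP => ?; lra. Qed.

Lemma vb_core cs v t1 A2 : v \notin T -> t1 \in T -> sorted <%R (0 :: cs) ->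
  (forall c, c \in cs -> c <= 2^-1) ->
  (forall t, t \in T -> a t1 v <= a t v) ->
  (forall t, t \in T -> t != t1 -> A2 <= a t v) ->
  Num.min A2 2^-1 \in 0 :: cs ->
  (A2 < 2^-1 -> a t1 v <= A2 /\ 1 <= a t1 v + D v + A2) ->
  Num.min (a t1 v) 2^-1 \in 0 :: cs ->
  Num.min (a t1 v + D v) 2^-1 \in 0 :: cs ->
  2^-1 \in 0 :: cs ->
  wsum 0 cs (fun c => h c v) <= D v / 2.
Proof.
move=> Hv Ht1 Hs Hle Hmin H2 m2 H3 m1 m1' mh.
have Hpos : forall c, c \in cs -> 0 < c.
  move=> c Hc; move: Hs; rewrite /= (path_sortedE lt_trans) => /andP[Hall _].
  exact: (allP Hall).
set A1 := a t1 v.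
have HD := D_ge0 v.
have HA1 := a_ge0 t1 v.
apply: le_trans (wsum_le (G := fun c => 2^-1 * ind ((A1 < c) && (c <= A1 + D v))
   + 2^-1 * ind ((A2 < c) && (c <= 2^-1))) Hs _) _.
  move=> c Hc; have c0 := Hpos c Hc; have c1 := Hle c Hc.
  rewrite /h; case: ifP => Hc2.
    case/card_gt1P: Hc2 => t [t' [Ht Ht' Htt']].
    rewrite !inE in Ht Ht'; case/andP: Ht => HtT Htb; case/andP: Ht' => Ht'T Ht'b.
    have [tb [HtbT Htb1 Hbb]] : exists tb, [/\ tb \in T, tb != t1 & bnd c tb v].
      case: (eqVneq t t1) => [Ett1|Hne]; last by exists t.
      by exists t'; split => //; rewrite -Ett1 eq_sym.
    case/andP: Hbb => Hb1 Hb2.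
    have HA := Hmin tb HtbT; have HA2 := H2 tb HtbT Htb1.
    have Hpair := a_pair Ht1 HtbT (neq_sym Htb1) Hv.
    rewrite /ind; have -> : (A1 < c) && (c <= A1 + D v).
      by apply/andP; split; rewrite /A1 in HA Hpair *; lra.
    have -> : (A2 < c) && (c <= 2^-1) by apply/andP; split; lra.
    lra.
  have Gge0 : (0 : R) <= 2^-1 * ind ((A1 < c) && (c <= A1 + D v))
      + 2^-1 * ind ((A2 < c) && (c <= 2^-1)).
    by rewrite /ind; case: ifP => _; case: ifP => _; lra.
  case: ifP => Hc1 //.
  case/card_gt0P: Hc1 => t; rewrite inE => /andP[HtT /andP[Hb1 Hb2]].
  case: (eqVneq t t1) => [Ett1|Hne].
    rewrite Ett1 in Hb1 Hb2; rewrite /ind /A1 Hb1 Hb2 /=.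
    by case: ifP => _; lra.
  have HA2 := H2 t HtT Hne.
  have -> : (A2 < c) && (c <= 2^-1) by apply/andP; split; lra.
  by rewrite /ind; case: ifP => _; lra.
rewrite wsum_add !wsum_scale.
rewrite (wsum_ext 0 (G := fun c => ind ((Num.min A1 2^-1 < c) &&
    (c <= Num.min (A1 + D v) 2^-1)))); last first.
  by move=> c Hc; apply: cl_ind; [apply: Hpos | apply: Hle].
rewrite (wsum_ext 0 (F := fun c => ind ((A2 < c) && (c <= 2^-1)))
  (G := fun c => ind ((Num.min A2 2^-1 < c) &&
    (c <= Num.min 2^-1 2^-1)))); last first.
  by move=> c Hc; apply: cl_ind; [apply: Hpos | apply: Hle].
rewrite minxx !wsum_int //; first last.
- by rewrite le_min !ge_min lexx orbT andbT lerDl HD.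
- by rewrite ge_min lexx orbT.
case: (ltP A2 2^-1) => HA2.
  case: (H3 HA2) => HA12 Hp.
  rewrite /A1 !minElt; case: (ltP (a t1 v + D v) 2^-1) => ?.
    by case: (ltP (a t1 v) 2^-1) => ?; case: (ltP A2 2^-1) => ?; lra.
  by case: (ltP (a t1 v) 2^-1) => ?; case: (ltP A2 2^-1) => ?; lra.
have := cl_lip (a t1 v) HD.
rewrite /A1 !minElt; case: (ltP (a t1 v + D v) 2^-1) => ?.
  by case: (ltP (a t1 v) 2^-1) => ?; case: (ltP A2 2^-1) => ?; lra.
by case: (ltP (a t1 v) 2^-1) => ?; case: (ltP A2 2^-1) => ?; lra.
Qed.

Lemma vertex_bound cs v : v \notin T -> sorted <%R (0 :: cs) ->
  (forall c, c \in cs -> c <= 2^-1) ->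
  (forall t u, Num.min (a t u) 2^-1 \in 0 :: cs) ->
  (forall t u, Num.min (a t u + D u) 2^-1 \in 0 :: cs) ->
  2^-1 \in 0 :: cs ->
  wsum 0 cs (fun c => h c v) <= D v / 2.
Proof.
move=> Hv Hs Hle m1 m1' mh.
case: (set_0Vmem T) => [T0|[t0 Ht0]].
  rewrite wsum0; first by have := D_ge0 v; lra.
  move=> c _; rewrite /h /cnt (_ : [set t in T | bnd c t v] = set0) ?cards0 //.
  by apply/setP => t; rewrite !inE T0 in_set0.
case: (@arg_minP _ _ _ t0 (mem T) (fun t => a t v) Ht0) => t1 Ht1' Hmin.
have Ht1 : t1 \in T := Ht1'.
case: (set_0Vmem (T :\ t1)) => [T'0|[t0' Ht0']].
  apply: (@vb_core cs v t1 2^-1) => //.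
  - move=> t Ht Hne; have : t \in T :\ t1 by rewrite !inE Hne Ht.
    by rewrite T'0 in_set0.
  - by rewrite minxx.
  - by rewrite ltxx.
case: (@arg_minP _ _ _ t0' (mem (T :\ t1)) (fun t => a t v) Ht0') => t2 Ht2 Hmin2.
have Ht2' : t2 \in T :\ t1 := Ht2.
move: Ht2'; rewrite !inE => /andP[Ht21 Ht2T].
apply: (@vb_core cs v t1 (a t2 v)) => //.
- move=> t Ht Hne; have Ht' : t \in T :\ t1 by rewrite !inE Hne Ht.
  exact: Hmin2 Ht'.
- move=> _; split; first exact: Hmin.
  exact: a_pair Ht1 Ht2T (neq_sym Ht21) Hv.
Qed.

Lemma half_lemma (LP : R) : lp_cost T d = LP ->
  (forall d', lp_feasible e T set0 d' -> LP <= lp_cost T d') ->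
  (forall t w, t \in T -> w \notin T -> e t w ->
     exists LPw : R, lp_value e T [set w] LPw /\ LP < LPw) ->
  forall t w, t \in T -> w \notin T -> e t w -> 2^-1 <= d w.
Proof.
move=> Hc Hopt R3 t w Ht Hw Htw; rewrite leNgt; apply/negP => Hdw.
have [LPw [[_ HLPw] Hlt]] := R3 t w Ht Hw Htw.
set P1 := [seq Num.min (a t0 v) 2^-1 | t0 <- enum V, v <- enum V].
set P2 := [seq Num.min (a t0 v + D v) 2^-1 | t0 <- enum V, v <- enum V].
set L := 2^-1 :: P1 ++ P2.
set cs := sort <=%R (undup [seq x <- L | 0 < x]).
have memcs : forall x, x \in cs = (x \in L) && (0 < x).
  by move=> x; rewrite /cs mem_sort mem_undup mem_filter andbC.
have Hs : sorted <%R (0 :: cs).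
  rewrite /= (path_sortedE lt_trans) sort_lt_sorted undup_uniq andbT.
  by apply/allP => x; rewrite memcs => /andP[].
have Lle : forall x, x \in L -> x <= 2^-1.
  move=> x; rewrite inE mem_cat => /orP[/eqP->//|/orP[]/allpairsP[[t0 v] [_ _ ->]]];
  by rewrite ge_min lexx orbT.
have Hle : forall c, c \in cs -> c <= 2^-1.
  by move=> c; rewrite memcs => /andP[/Lle].
have memL : forall x, x \in L -> 0 <= x -> x \in 0 :: cs.
  move=> x HL; rewrite le_eqVlt => /orP[/eqP<-|Hx]; first by rewrite mem_head.
  by rewrite inE memcs HL Hx orbT.
have half_gt0 : (0 : R) < 2^-1 by rewrite invr_gt0 ltr0n.
have mh : 2^-1 \in 0 :: cs by apply: memL; [rewrite mem_head | exact: ltW].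
have m1 : forall t0 u, Num.min (a t0 u) 2^-1 \in 0 :: cs.
  move=> t0 u; apply: memL; last by rewrite le_min a_ge0 ltW.
  rewrite inE mem_cat; apply/orP; right; apply/orP; left.
  by apply/allpairsP; exists (t0, u); rewrite !mem_enum.
have m1' : forall t0 u, Num.min (a t0 u + D u) 2^-1 \in 0 :: cs.
  move=> t0 u; apply: memL; last by rewrite le_min addr_ge0 ?a_ge0 ?D_ge0 ?ltW.
  rewrite inE mem_cat; apply/orP; right; apply/orP; right.
  by apply/allpairsP; exists (t0, u); rewrite !mem_enum.
have Hub : wsum 0 cs (fun c => lp_cost T (h c)) <= lp_cost T d / 2.
  rewrite /lp_cost (wsum_sum (~: T) 0 cs (fun v c => h c v)) mulr_suml.
  apply: ler_sum => v; rewrite inE => Hv.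
  have := vertex_bound Hv Hs Hle m1 m1' mh.
  by rewrite /D (negbTE Hv).
have one : wsum 0 cs (fun _ => 1) = 2^-1.
  rewrite (wsum_ext 0 (G := fun c => ind ((0 < c) && (c <= 2^-1)))).
    by rewrite wsum_int ?mem_head ?subr0 ?ltW.
  move=> c Hc0; rewrite /ind Hle // andbT.
  by move: Hc0; rewrite memcs => /andP[_ ->].
have hw0 : h 2^-1 w = 0.
  rewrite /h /cnt (_ : [set t0 in T | bnd 2^-1 t0 w] = set0) ?cards0 //.
  apply/setP => t0; rewrite !inE; apply/negP => /andP[Ht0 /andP[Hb1 Hb2]].
  have HDw : D w = d w by rewrite /D (negbTE Hw).
  case: (eqVneq t t0) => [Ett0|Hne].
    by move: Hb2; rewrite -Ett0 a_N // add0r HDw leNgt Hdw.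
  have := a_pair Ht Ht0 Hne Hw; rewrite a_N // add0r HDw; lra.
have feas2 : lp_feasible e T set0 (h 2^-1) by apply: h_feas; lra.
have feasw : lp_feasible e T [set w] (h 2^-1).
  case: feas2 => [F1' [F2' _]]; split=> //; split=> // w'.
  by rewrite inE => /eqP->.
have Hlb : LP * 2^-1 < wsum 0 cs (fun c => lp_cost T (h c)).
  rewrite -one -wsum_scale; apply: wsum_lt => //.
    move=> c Hc0; rewrite mulr1; apply: Hopt; apply: h_feas.
      by move: Hc0; rewrite memcs => /andP[].
    by apply: le_trans (Hle c Hc0) _; lra.
  exists 2^-1; first by rewrite memcs inE eqxx half_gt0.
  by rewrite mulr1; apply: lt_le_trans Hlt (HLPw _ feasw).
rewrite Hc in Hub; lra.
Qed.

End Graph.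

Section Final.
Variables (R : realFieldType) (V : finType) (e : rel V) (T : {set V}).
Hypothesis e_sym : symmetric e.
Hypothesis R1a : forall t t', t \in T -> t' \in T -> ~~ e t t'.
Hypothesis R2 : forall v t t', v \notin T -> t \in T -> t' \in T -> t != t' ->
          e v t -> e v t' -> False.

Lemma NmemI v t : v \notin T -> t \in T -> e t v -> v \in nbhS e T.
Proof.
move=> Hv Ht Htv; rewrite /nbhS in_setD Hv /=.
by apply/bigcupP; exists t => //; rewrite inE.
Qed.

Lemma memN v : v \in nbhS e T -> v \notin T /\ exists2 t, t \in T & e t v.
Proof.
rewrite /nbhS in_setD => /andP[Hv /bigcupP[t Ht]]; rewrite inE => Htv.
by split => //; exists t.
Qed.

Lemma tp_ends x s : term_path e T x s ->
  exists y z, [/\ y \in x :: s, z \in x :: s, e x y, e z (last x s) & (y \notin T) && (z \notin T)].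
Proof.
case/and5P => px ux xT lT xl.
have [y [ys exy]] : exists y, y \in s /\ e x y.
  case: s px xl {ux lT} => [|y s]; first by rewrite eqxx.
  by move=> /andP[exy _] _; exists y; rewrite mem_head.
have [z [zs ezl]] : exists z, z \in x :: s /\ e z (last x s).
  clear ys ux lT; elim/last_ind: s px xl => [|s' l _]; first by rewrite eqxx.
  rewrite rcons_path last_rcons => /andP[_ ezl] _; exists (last x s'); split => //.
  have := mem_last x s'; rewrite !inE mem_rcons inE => /orP[->//|->].
  by rewrite !orbT.
exists y, z; split => //; first by rewrite inE ys orbT.
apply/andP; split.
- by apply/negP => yT; move: (R1a xT yT); rewrite exy.
- by apply/negP => zT; move: (R1a zT lT); rewrite ezl.
Qed.

Lemma count_cost (A : {set V}) (c : R) : A \subset ~: T ->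
  lp_cost T (fun v => if v \in A then c else 0) = c * #|A|%:R.
Proof.
move=> sub; rewrite /lp_cost -big_mkcondr /=.
rewrite (eq_bigl (fun v => v \in A)); first by rewrite sumr_const mulr_natr.
move=> v /=; case: (boolP (v \in A)) => H; last by rewrite andbF.
by rewrite andbT (subsetP sub).
Qed.

Lemma nbhS_sub : nbhS e T \subset ~: T.
Proof. by apply/subsetP => v /memN [Hv _]; rewrite inE. Qed.

End Final.

Unset Implicit Arguments.

Theorem mainTheorem3 (R : realFieldType) (V : finType) (e : rel V)
  (T : {set V}) (k : int) (LP : R)
  (e_sym : symmetric e) (e_irr : irreflexive e)
  (hLP : lp_value e T set0 LP)
  (R1a : forall t t', t \in T -> t' \in T -> ~~ e t t')
  (R1b : 0 <= k%:~R - LP)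
  (R2 : forall v t t', v \notin T -> t \in T -> t' \in T -> t != t' ->
          e v t -> e v t' -> False)
  (R3 : forall t w, t \in T -> w \notin T -> e t w ->
          exists LPw : R, lp_value e T [set w] LPw /\ LP < LPw) :
  lp_optimal e T
    (fun v : V => if v \in nbhS e T then (2%:R)^-1 else (0 : R))
  /\ (forall t, t \in T -> unique_min_sep_cut e T t (nbh e t)).
Proof.
case: hLP => [[d [dfeas dcost]] Hopt].
have half := half_lemma e_sym R1a dfeas dcost Hopt R3.
have hpos : (0 : R) <= 2^-1 by rewrite invr_ge0 ler0n.
set hs := fun v : V => if v \in nbhS e T then (2%:R)^-1 else (0 : R).
have hs_cost : lp_cost T hs <= LP.
  rewrite -dcost /lp_cost; apply: ler_sum => v; rewrite inE => Hv.
  rewrite /hs; case: ifP => Hn.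
    by case: (memN Hn) => _ [t Ht Htv]; exact: half Ht Hv Htv.
  by case: dfeas => H _; apply: H.
have hs_cnt : lp_cost T hs = 2^-1 * #|nbhS e T|%:R.
  by rewrite /hs count_cost ?nbhS_sub.
split.
  split; last by move=> d' /Hopt; apply: le_trans.
  split; first by move=> v _; rewrite /hs; case: ifP.
  split; last by move=> w; rewrite in_set0.
  move=> x s tp; rewrite sumD.
  case: (tp_ends R1a tp) => y [z [yin zin exy ezl /andP[yT zT]]].
  case/and5P: tp => px ux xT lT xl.
  apply: (sum_two (u := y) (q := z)) => //.
  - by move=> v _; rewrite /hs; case: (v \in T) => //; case: ifP.
  - move=> _; rewrite (negbTE yT) (negbTE zT) /hs.
    rewrite (NmemI yT xT exy) (NmemI zT lT); last by rewrite e_sym.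
    lra.
  - move=> Eyz; exfalso; apply: (R2 _ _ _ yT xT lT xl); first by rewrite e_sym.
    by rewrite Eyz.
move=> t Ht.
have nbh_sub : nbh e t \subset ~: T.
  by apply/subsetP => u; rewrite !inE => Htu; apply/negP => uT; move: (R1a _ _ Ht uT); rewrite Htu.
have sepN : sep_cut e T t (nbh e t).
  rewrite /sep_cut nbh_sub /=; apply/forall_inP => t' Ht'.
  apply/negP => /connectP [p pp lp].
  case: p pp lp => [|y p1] /=; first by move=> _ Et; move: Ht'; rewrite -Et !inE eqxx.
  by rewrite /del_rel /= !inE => /andP[/and3P[-> _]].
split => // S' /andP[subS' Hsep] Hcard.
case: (boolP (nbh e t \subset S')) => sub.
  by apply/eqP; rewrite eq_sym eqEcard sub Hcard.
exfalso; case/subsetPn: sub => w; rewrite inE => Htw wS.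
have wT : w \notin T by apply/negP => wT; move: (R1a _ _ Ht wT); rewrite Htw.
have [LPw [[_ HLPw] Hlt]] := R3 t w Ht wT Htw.
set N' := nbhS e T :\: nbh e t.
set d' := fun v => (if v \in S' then (2^-1 : R) else 0) + (if v \in N' then 2^-1 else 0).
have N'_sub : N' \subset ~: T.
  by apply/subsetP => v; rewrite inE => /andP[_ /(subsetP (@nbhS_sub _ e T))].
have cost' : lp_cost T d' = 2^-1 * #|S'|%:R + 2^-1 * #|N'|%:R.
  rewrite /lp_cost big_split /=.
  by rewrite -/(lp_cost T _) -/(lp_cost T _) !count_cost.
have card' : (#|S'| + #|N'| <= #|nbhS e T|)%N.
  rewrite -(cardsID (nbh e t) (nbhS e T)).
  rewrite (_ : nbhS e T :&: nbh e t = nbh e t); first by rewrite leq_add2r.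
  apply/setIidPr/subsetP => u; rewrite inE => Htu.
  by apply: (NmemI _ Ht Htu); apply/negP => uT; move: (R1a _ _ Ht uT); rewrite Htu.
have inN' : forall v t0, v \notin T -> t0 \in T -> t0 != t -> e t0 v -> v \in N'.
  move=> v t0 Hv Ht0 Hne Hv0; rewrite inE (NmemI Hv Ht0 Hv0) andbT inE.
  apply/negP => Htv; apply: (R2 _ _ _ Hv Ht0 Ht Hne); rewrite e_sym //.
have d'_ge0 : forall v, 0 <= d' v.
  by move=> v; rewrite /d'; case: ifP => _; case: ifP => _; lra.
have half_S : forall v, v \in S' -> 2^-1 <= d' v.
  by move=> v Hv; rewrite /d' Hv; case: ifP => _; lra.
have half_N : forall v, v \in N' -> 2^-1 <= d' v.
  by move=> v Hv; rewrite /d' Hv; case: ifP => _; lra.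
have symdel : symmetric (del_rel e S').
  by move=> x y; rewrite /del_rel /= e_sym; case: (x \in S'); case: (y \in S'); rewrite /= ?andbT ?andbF.
have findS : forall x s, path e x s -> x \in T -> last x s \in T -> x != last x s ->
    (x = t \/ last x s = t) -> exists2 u, u \in x :: s & u \in S'.
  move=> x s px xT lT xl Hxt.
  case: (boolP (has (fun u => u \in S') (x :: s))) => [/hasP[u0 Hu1 Hu2]|]; first by exists u0.
  rewrite -all_predC => /allP Hall; exfalso.
  have pd : path (del_rel e S') x s.
    elim: s x px Hall {xT lT xl Hxt} => //= y s IH x /andP[exy ps] Hall.
    rewrite /del_rel /= exy (Hall x (mem_head _ _)) (Hall y) ?inE ?eqxx ?orbT //=.
    by apply: IH => // u1 Hu; apply: Hall; rewrite inE Hu orbT.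
  have cxl : connect (del_rel e S') x (last x s) by apply/connectP; exists s.
  case: Hxt => Ext.
    move/forall_inP: Hsep => /(_ (last x s)); rewrite !inE lT -Ext eq_sym xl.
    by move/(_ isT); rewrite cxl.
  move/forall_inP: Hsep => /(_ x); rewrite !inE xT -Ext xl.
  by move/(_ isT); rewrite (sym_connect_sym symdel) cxl.
have feas' : lp_feasible e T [set w] d'.
  split; first by move=> v _; apply: d'_ge0.
  split; last first.
    move=> w'; rewrite inE => /eqP->; rewrite /d' (negbTE wS).
    by rewrite inE inE Htw /= add0r.
  move=> x s tp; rewrite sumD.
  case: (tp_ends R1a tp) => y [z [yin zin exy ezl /andP[yT zT]]].
  case/and5P: tp => px ux xT lT xl.
  have S'T : forall u2, u2 \in S' -> u2 \notin T.
    by move=> u2 /(subsetP subS'); rewrite inE.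
  have nn : forall v, 0 <= (if v \in T then 0 else d' v).
    by move=> v; case: (v \in T).
  case: (eqVneq x t) => [Ext|Hxt].
    have zN : z \in N'.
      apply: (inN' _ _ zT lT); last by rewrite e_sym.
      by rewrite -Ext eq_sym.
    case: (findS x s px xT lT xl (or_introl Ext)) => uu uin uS.
    apply: (sum_two (u := uu) (q := z)) => //.
    - move=> _; rewrite (negbTE (S'T _ uS)) (negbTE zT).
      by have := half_S _ uS; have := half_N _ zN; lra.
    - move=> Euz; rewrite Euz in uS *; rewrite (negbTE zT) /d' uS zN; lra.
  case: (eqVneq (last x s) t) => [Elt|Hlt'].
    have yN : y \in N' by apply: (inN' _ _ yT xT Hxt exy).
    case: (findS x s px xT lT xl (or_intror Elt)) => uu uin uS.
    apply: (sum_two (u := uu) (q := y)) => //.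
    - move=> _; rewrite (negbTE (S'T _ uS)) (negbTE yT).
      by have := half_S _ uS; have := half_N _ yN; lra.
    - move=> Euy; rewrite Euy in uS *; rewrite (negbTE yT) /d' uS yN; lra.
  have yN : y \in N' by apply: (inN' _ _ yT xT Hxt exy).
  have zN : z \in N' by apply: (inN' _ _ zT lT Hlt'); rewrite e_sym.
  apply: (sum_two (u := y) (q := z)) => //.
  - move=> _; rewrite (negbTE yT) (negbTE zT).
    by have := half_N _ yN; have := half_N _ zN; lra.
  - move=> Eyz; exfalso; apply: (R2 _ _ _ yT xT lT xl); first by rewrite e_sym.
    by rewrite Eyz.
have := HLPw _ feas'; rewrite cost'.
have : (#|S'| + #|N'|)%:R <= #|nbhS e T|%:R :> R by rewrite ler_nat card'.
rewrite natrD => Hc1 Hc2.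
have := hs_cost; rewrite hs_cnt => Hc3.
lra.
Qed.
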